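(* Let $\mathbb{F}$ be an algebraically closed field of characteristic zero. For any $f\in S_{3,3}$, the set $P_{3,3}\setminus\{f\}$ is not a separating set for $\mathcal{O}(\mathcal{N}_3^3)^{GL_3}$. In particular, no proper subset of $S_{3,3}$ is a separating set for $\mathcal{O}(\mathcal{N}_3^3)^{GL_3}$.
   Context: $\mathcal{N}_3^3$ is the set of triples $\underline{A}=(A_1,A_2,A_3)$ of nilpotent $3\times3$ matrices over $\mathbb{F}$, with $GL_3$ acting by simultaneous conjugation; $\mathcal{O}(\mathcal{N}_3^3)^{GL_3}$ is the algebra of $GL_3$-invariant polynomial functions on $\mathcal{N}_3^3$. $\mathrm{tr}(Y_{i_1}\cdots Y_{i_r})$ denotes the invariant $\underline{A}\mapsto\mathrm{tr}(A_{i_1}\cdots A_{i_r})$. $S_{3,3}$ is the set consisting of: $\mathrm{tr}(Y_iY_j),\ \mathrm{tr}(Y_i^2Y_j),\ \mathrm{tr}(Y_iY_j^2),\ \mathrm{tr}(Y_i^2Y_j^2),\ \mathrm{tr}(Y_i^2Y_j^2Y_iY_j)$ for $1\le i<j\le3$; $\mathrm{tr}(Y_1Y_2Y_3)$, $\mathrm{tr}(Y_1Y_3Y_2)$; $\mathrm{tr}(Y_i^2Y_jY_k)$ for $\{i,j,k\}=\{1,2,3\}$; $\mathrm{tr}(Y_1^2Y_2Y_1Y_3)$, $\mathrm{tr}(Y_2^2Y_1Y_2Y_3)$, $\mathrm{tr}(Y_3^2Y_1Y_3Y_2)$. $P_{3,3}=S_{3,3}\sqcup P'_{3,3}$, where $P'_{3,3}$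 consists of $\mathrm{tr}(Y_i^2Y_j^2Y_k)$ and $\mathrm{tr}(Y_i^2Y_j^2Y_iY_k)$ for $\{i,j,k\}=\{1,2,3\}$, and $\mathrm{tr}(Y_1^2Y_2^2Y_3^2)$. Two points $u,v$ are separated by a subset $S$ if some $f\in S$ has $f(u)\ne f(v)$, and separated if separated by the whole invariant algebra; $S$ is separating if all separated pairs are separated by $S$. *)

(* Defs.v *)
From HB Require Import structures.
From mathcomp Require Import all_boot all_order all_algebra.
From mathcomp Require Import mpoly.
Set Implicit Arguments. Unset Strict Implicit. Unset Printing Implicit Defensive.
Import Order.TTheory GRing.Theory Num.Theory.
Local Open Scope ring_scope.

(* A triple (A_1, A_2, A_3) of 3x3 matrices; component i+1 is X i. *)
Definition triple (F : fieldType) := 'I_3 -> 'M[F]_3.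

Definition nilpotent_mx (F : fieldType) (A : 'M[F]_3) : Prop :=
  exists n : nat, A ^+ n = 0.

Definition in_N (F : fieldType) (X : triple F) : Prop :=
  forall i, nilpotent_mx (X i).

Definition coords (F : fieldType) (X : triple F) : 'I_27 -> F :=
  fun k => X (inord (k %/ 9)) (inord ((k %% 9) %/ 3)) (inord (k %% 3)).

Definition polyfun_on_N (F : fieldType) (g : triple F -> F) : Prop :=
  exists p : {mpoly F[27]}, forall X, in_N X -> g X = p.@[coords X].

Definition conj_act (F : fieldType) (G : 'M[F]_3) (X : triple F) : triple F :=
  fun i => G *m X i *m invmx G.

(* elements of O(N_3^3)^{GL_3} (represented by functions, equality on N) *)
Definition invariant (F : fieldType) (g : triple F -> F) : Prop :=
  polyfun_on_N g /\
  forall G X, G \in unitmx -> in_N X -> g (conj_act G X) = g X.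

Definition separated_by (F : fieldType) (S : (triple F -> F) -> Prop)
  (u v : triple F) : Prop :=
  exists f, S f /\ f u <> f v.

Definition separated (F : fieldType) (u v : triple F) : Prop :=
  separated_by (@invariant F) u v.

Definition separating (F : fieldType) (S : (triple F -> F) -> Prop) : Prop :=
  forall u v, in_N u -> in_N v -> separated u v -> separated_by S u v.

(* tr(Y_{i_1} ... Y_{i_r}); indices in words are 1, 2, 3 as in the paper *)
Definition trw (F : fieldType) (w : seq nat) (X : triple F) : F :=
  \tr (\prod_(i <- w) X (inord i.-1)).

Definition pairs_lt : seq (nat * nat) := [:: (1, 2); (1, 3); (2, 3)]%N.
Definition perms3 : seq (nat * nat * nat) :=
  [:: (1, 2, 3); (1, 3, 2); (2, 1, 3); (2, 3, 1); (3, 1, 2); (3, 2, 1)]%N.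

Definition S33 : seq (seq nat) :=
  flatten [seq [:: [:: p.1; p.2]; [:: p.1; p.1; p.2]; [:: p.1; p.2; p.2];
                   [:: p.1; p.1; p.2; p.2]; [:: p.1; p.1; p.2; p.2; p.1; p.2]]
          | p <- pairs_lt]
  ++ [:: [:: 1; 2; 3]; [:: 1; 3; 2]]%N
  ++ [seq [:: t.1.1; t.1.1; t.1.2; t.2] | t <- perms3]
  ++ [:: [:: 1; 1; 2; 1; 3]; [:: 2; 2; 1; 2; 3]; [:: 3; 3; 1; 3; 2]]%N.

Definition P'33 : seq (seq nat) :=
  [seq [:: t.1.1; t.1.1; t.1.2; t.1.2; t.2] | t <- perms3]
  ++ [seq [:: t.1.1; t.1.1; t.1.2; t.1.2; t.1.1; t.2] | t <- perms3]
  ++ [:: [:: 1; 1; 2; 2; 3; 3]]%N.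

Definition P33 : seq (seq nat) := S33 ++ P'33.

Definition trset (F : fieldType) (L : seq (seq nat)) : (triple F -> F) -> Prop :=
  fun g => exists2 w, w \in L & g = trw w.

Definition eq_on_N (F : fieldType) (f g : triple F -> F) : Prop :=
  forall X, in_N X -> f X = g X.

Definition P33_minus (F : fieldType) (f : triple F -> F) : (triple F -> F) -> Prop :=
  fun g => @trset F P33 g /\ ~ eq_on_N g f.

(* Main.v *)
Require Import Defs.
From HB Require Import structures.
From mathcomp Require Import all_boot all_order all_algebra.
From mathcomp Require Import mpoly.
From mathcomp Require Import zify.
Set Implicit Arguments. Unset Strict Implicit. Unset Printing Implicit Defensive.
Import Order.TTheory GRing.Theory Num.Theory.
Local Open Scope ring_scope.

Section Inv.
Variable F : fieldType.

Lemma conj_prod (G : 'M[F]_3) (X : triple F) (w : seq nat) : G \in unitmx ->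
  \prod_(i <- w) conj_act G X (inord i.-1) = G *m (\prod_(i <- w) X (inord i.-1)) *m invmx G.
Proof.
move=> uG; elim: w => [|a w IH].
  by rewrite !big_nil mulmx1 mulmxV.
rewrite !big_cons IH /conj_act -!mulmxE.
by rewrite !mulmxA -(mulmxA _ (invmx G) G) mulVmx // mulmx1.
Qed.

Lemma trw_conj (G : 'M[F]_3) (X : triple F) w : G \in unitmx ->
  trw w (conj_act G X) = trw w X.
Proof.
move=> uG; by rewrite /trw conj_prod // mxtrace_mulC mulmxA mulVmx // mul1mx.
Qed.

Definition Mv (i : 'I_3) : 'M[{mpoly F[27]}]_3 :=
  \matrix_(r, c) 'X_(inord (9 * i + 3 * r + c)).

Lemma Mv_eval (X : triple F) (i : 'I_3) :
  map_mx (meval (coords X)) (Mv i) = X i.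
Proof.
apply/matrixP => r c; rewrite !mxE mevalXU /coords.
have H : (9 * i + 3 * r + c < 27)%N by case: i r c => [i Hi] [r Hr] [c Hc] /=; lia.
rewrite inordK //.
have E1 : ((9 * i + 3 * r + c) %/ 9 = i)%N by case: i r c {H} => [i Hi] [r Hr] [c Hc] /=; lia.
have E2 : (((9 * i + 3 * r + c) %% 9) %/ 3 = r)%N by case: i r c {H E1} => [i Hi] [r Hr] [c Hc] /=; lia.
have E3 : ((9 * i + 3 * r + c) %% 3 = c)%N by case: i r c {H E1 E2} => [i Hi] [r Hr] [c Hc] /=; lia.
by rewrite E1 E2 E3 !inord_val.
Qed.

Lemma trw_poly w : polyfun_on_N (trw (F := F) w).
Proof.
exists (\tr (\prod_(i <- w) Mv (inord i.-1))) => X _; symmetry.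
rewrite /trw /mxtrace rmorph_sum /=; apply: eq_bigr => k _.
transitivity ((map_mx (meval (coords X)) (\prod_(i <- w) Mv (inord i.-1))) k k);
  first by rewrite mxE.
suff -> : map_mx (meval (coords X)) (\prod_(i <- w) Mv (inord i.-1)) =
  \prod_(i <- w) X (inord i.-1) by [].
rewrite (big_morph (map_mx (meval (coords X))) (id1 := 1) (op1 := *%R)).
- by apply: eq_bigr => i _; rewrite Mv_eval.
- by move=> A B; rewrite -!mulmxE map_mxM.
- by rewrite map_mx1.
Qed.

Lemma trw_inv w : Defs.invariant (trw (F := F) w).
Proof. split; first exact: (@trw_poly w). by move=> G X uG _; rewrite trw_conj. Qed.
End Inv.

Definition mat := seq (seq int).
Definition ent (a : mat) (i j : nat) : int := nth 0 (nth [::] a i) j.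
Definition mrow (a b : mat) (i : nat) : seq int :=
  [:: ent a i 0 * ent b 0 0 + ent a i 1 * ent b 1 0 + ent a i 2 * ent b 2 0;
      ent a i 0 * ent b 0 1 + ent a i 1 * ent b 1 1 + ent a i 2 * ent b 2 1;
      ent a i 0 * ent b 0 2 + ent a i 1 * ent b 1 2 + ent a i 2 * ent b 2 2].
Definition mul3 (a b : mat) : mat := [:: mrow a b 0; mrow a b 1; mrow a b 2].
Definition id3 : mat := [:: [:: 1; 0; 0]; [:: 0; 1; 0]; [:: 0; 0; 1]].
Definition tr3 (a : mat) : int := ent a 0 0 + ent a 1 1 + ent a 2 2.
Definition idx (i : nat) : nat := if (i.-1 < 3)%N then i.-1 else 0%N.
Definition prodw (X : seq mat) (w : seq nat) : mat :=
  foldr (fun i acc => mul3 (nth [::] X (idx i)) acc) id3 w.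
Definition trZ (w : seq nat) (X : seq mat) : int := tr3 (prodw X w).
Definition nil3 (a : mat) : bool :=
  all (fun i => all (fun j => ent (mul3 a (mul3 a a)) i j == 0) (iota 0 3)) (iota 0 3).

Section Bridge.
Variable F : fieldType.
Definition toM (a : mat) : 'M[F]_3 := \matrix_(i, j) (ent a i j)%:~R.
Definition toT (X : seq mat) : triple F := fun i => toM (nth [::] X i).

Lemma toM_mul a b : toM (mul3 a b) = toM a *m toM b.
Proof.
apply/matrixP => i j; rewrite !mxE !big_ord_recl big_ord0 addr0 !mxE /=.
by case: i => [[|[|[|i]]] Hi] //; case: j => [[|[|[|j]]] Hj] //=;
  rewrite /ent /= ?rmorphD ?rmorphM /= addrA.
Qed.

Lemma toM_id : toM id3 = 1%:M.
Proof.
apply/matrixP => i j; rewrite !mxE.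
by case: i => [[|[|[|i]]] Hi] //; case: j => [[|[|[|j]]] Hj] //=.
Qed.

Lemma toM_tr a : \tr (toM a) = (tr3 a)%:~R.
Proof.
by rewrite /mxtrace !big_ord_recl big_ord0 addr0 !mxE /tr3 !rmorphD /= addrA.
Qed.

Lemma toT_inord X i : toT X (inord i.-1) = toM (nth [::] X (idx i)).
Proof.
rewrite /toT /idx; congr (toM (nth _ _ _)).
rewrite /inord val_insubd; case: ifP => //.
Qed.

Lemma trw_toT w X : trw w (toT X) = (trZ w X)%:~R.
Proof.
rewrite /trw /trZ -toM_tr; congr (\tr _).
elim: w => [|a w IH]; first by rewrite big_nil toM_id.
by rewrite big_cons IH /= toM_mul toT_inord mulmxE.
Qed.

Lemma toM0 a : (forall i j, (i < 3)%N -> (j < 3)%N -> ent a i j = 0) -> toM a = 0.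
Proof. by move=> H; apply/matrixP => i j; rewrite !mxE H. Qed.

Lemma nil3P a : nil3 a -> nilpotent_mx (toM a).
Proof.
move=> H; exists 3%N; rewrite !exprS expr0 mulr1 -!mulmxE -!toM_mul.
apply: toM0 => i j Hi Hj.
move: H => /allP /(_ i); rewrite mem_iota add0n => /(_ Hi) /allP /(_ j).
by rewrite mem_iota add0n => /(_ Hj) /eqP.
Qed.

Lemma toT_N X : (size X == 3%N) && all nil3 X -> in_N (toT X).
Proof.
case/andP => /eqP Hs /allP H i; rewrite /toT; apply: nil3P; apply: H.
by apply: mem_nth; rewrite Hs.
Qed.
End Bridge.

Definition cexl : seq (seq nat * (seq mat * seq mat)) := [::
  ([:: 1; 3]%N, ([:: [:: [:: 0; 1; 0]; [:: 0; 0; 1]; [:: 0; 0; 0]]; [:: [:: (-1); (-1); (-1)]; [:: 0; 0; 0]; [:: 1; 0; 1]]; [:: [:: (-1); (-1); (-1)]; [:: 0; 0; 0]; [:: 1; 0; 1]]], [:: [:: [:: 0; 1; 0]; [:: 0; 0; 1]; [:: 0; 0; 0]]; [:: [:: (-1); (-1); (-1)]; [:: 0; 0; 0]; [:: 1; 0; 1]]; [:: [:: (-1); 0; (-1)]; [:: 0; 0; 0]; [:: 1; (-1); 1]]]));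
  ([:: 1; 2; 3]%N, ([:: [:: [:: 0; 1; 0]; [:: 0; 0; 1]; [:: 0; 0; 0]]; [:: [:: (-1); (-1); (-1)]; [:: 0; 0; 0]; [:: 1; 0; 1]]; [:: [:: 0; (-1); (-1)]; [:: 0; 0; 0]; [:: 0; (-1); 0]]], [:: [:: [:: 0; 1; 0]; [:: 0; 0; 1]; [:: 0; 0; 0]]; [:: [:: (-1); (-1); (-1)]; [:: 0; 0; 0]; [:: 1; 0; 1]]; [:: [:: 0; 0; (-1)]; [:: 0; 0; 0]; [:: 0; (-1); 0]]]));
  ([:: 1; 3; 2]%N, ([:: [:: [:: 0; 1; 0]; [:: 0; 0; 1]; [:: 0; 0; 0]]; [:: [:: (-1); (-1); (-1)]; [:: 1; 1; 0]; [:: 0; 0; 0]]; [:: [:: 0; (-1); (-1)]; [:: 0; 0; 0]; [:: 0; 1; 0]]], [:: [:: [:: 0; 1; 0]; [:: 0; 0; 1]; [:: 0; 0; 0]]; [:: [:: (-1); (-1); (-1)]; [:: 1; 1; 0]; [:: 0; 0; 0]]; [:: [:: 0; 0; (-1)]; [:: 0; (-1); (-1)]; [:: 0; 1; 1]]]));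
  ([:: 2; 3]%N, ([:: [:: [:: 0; 1; 0]; [:: 0; 0; 1]; [:: 0; 0; 0]]; [:: [:: (-1); (-1); (-1)]; [:: 1; 1; 0]; [:: 0; 0; 0]]; [:: [:: 0; (-1); 0]; [:: 0; (-1); 1]; [:: 0; (-1); 1]]], [:: [:: [:: 0; 1; 0]; [:: 0; 0; 1]; [:: 0; 0; 0]]; [:: [:: (-1); (-1); (-1)]; [:: 1; 1; 0]; [:: 0; 0; 0]]; [:: [:: 0; 0; (-1)]; [:: 0; (-1); 1]; [:: 0; (-1); 1]]]));
  ([:: 1; 3; 3]%N, ([:: [:: [:: 0; 1; 0]; [:: 0; 0; 1]; [:: 0; 0; 0]]; [:: [:: (-1); (-1); (-1)]; [:: 1; 1; 0]; [:: 0; 0; 0]]; [:: [:: 0; 0; (-1)]; [:: 0; 0; 1]; [:: (-1); (-1); 0]]], [:: [:: [:: 0; 1; 0]; [:: 0; 0; 1]; [:: 0; 0; 0]]; [:: [:: (-1); (-1); (-1)]; [:: 1; 1; 0]; [:: 0; 0; 0]]; [:: [:: 0; 0; 0]; [:: 0; 0; 0]; [:: (-1); (-1); 0]]]));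
  ([:: 2; 2; 3]%N, ([:: [:: [:: 0; 1; 0]; [:: 0; 0; 1]; [:: 0; 0; 0]]; [:: [:: (-1); (-1); (-1)]; [:: 1; 1; 0]; [:: 0; 0; 0]]; [:: [:: 0; (-1); (-1)]; [:: 0; 0; 0]; [:: 0; (-1); 0]]], [:: [:: [:: 0; 1; 0]; [:: 0; 0; 1]; [:: 0; 0; 0]]; [:: [:: (-1); (-1); 0]; [:: 1; 1; 0]; [:: 0; 0; 0]]; [:: [:: 0; (-1); (-1)]; [:: 0; 0; 0]; [:: 0; (-1); 0]]]));
  ([:: 1; 1; 3]%N, ([:: [:: [:: 0; 1; 0]; [:: 0; 0; 1]; [:: 0; 0; 0]]; [:: [:: (-1); (-1); (-1)]; [:: 1; 1; 0]; [:: 0; 0; 0]]; [:: [:: 1; 1; (-1)]; [:: (-1); (-1); 0]; [:: 0; 0; 0]]], [:: [:: [:: 0; 1; 0]; [:: 0; 0; 1]; [:: 0; 0; 0]]; [:: [:: (-1); (-1); 0]; [:: 1; 1; 0]; [:: 0; 0; 0]]; [:: [:: 0; 0; 0]; [:: 0; 0; 0]; [:: (-1); (-1); 0]]]));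
  ([:: 1; 1; 2; 2; 1; 2]%N, ([:: [:: [:: 0; 1; 0]; [:: 0; 0; 1]; [:: 0; 0; 0]]; [:: [:: (-1); (-1); (-1)]; [:: 0; 0; 0]; [:: 1; 0; 1]]; [:: [:: 0; 0; 0]; [:: 0; 0; 0]; [:: 0; 0; 0]]], [:: [:: [:: 0; 1; 0]; [:: 0; 0; 1]; [:: 0; 0; 0]]; [:: [:: (-1); 0; (-1)]; [:: 0; 0; (-1)]; [:: 1; 0; 1]]; [:: [:: 0; 0; 0]; [:: 0; 0; 0]; [:: 0; 0; 0]]]));
  ([:: 1; 2]%N, ([:: [:: [:: 0; 1; 0]; [:: 0; 0; 1]; [:: 0; 0; 0]]; [:: [:: (-1); (-1); (-1)]; [:: 0; 0; 0]; [:: 1; 0; 1]]; [:: [:: 0; (-1); 0]; [:: 0; 0; (-1)]; [:: 0; 0; 0]]], [:: [:: [:: 0; 1; 0]; [:: 0; 0; 1]; [:: 0; 0; 0]]; [:: [:: (-1); 0; (-1)]; [:: 0; 0; 0]; [:: 1; (-1); 1]]; [:: [:: 0; (-1); (-1)]; [:: 0; 0; (-1)]; [:: 0; 0; 0]]]));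
  ([:: 1; 2; 2]%N, ([:: [:: [:: 0; 1; 0]; [:: 0; 0; 1]; [:: 0; 0; 0]]; [:: [:: (-1); 0; (-1)]; [:: 0; 0; (-1)]; [:: 1; 0; 1]]; [:: [:: 0; 0; (-1)]; [:: (-1); 0; (-1)]; [:: 0; 0; 0]]], [:: [:: [:: 0; 1; 0]; [:: 0; 0; 1]; [:: 0; 0; 0]]; [:: [:: (-1); 0; (-1)]; [:: 0; 0; 0]; [:: 1; 0; 1]]; [:: [:: 0; 0; (-1)]; [:: (-1); 0; (-1)]; [:: 0; 0; 0]]]));
  ([:: 1; 1; 2; 1; 3]%N, ([:: [:: [:: 0; 1; 0]; [:: 0; 0; 1]; [:: 0; 0; 0]]; [:: [:: (-1); 0; (-1)]; [:: 0; 0; 0]; [:: 1; 0; 1]]; [:: [:: 0; (-1); 0]; [:: 0; 0; 0]; [:: 0; 1; 0]]], [:: [:: [:: 0; 1; 0]; [:: 0; 0; 1]; [:: 0; 0; 0]]; [:: [:: (-1); 0; (-1)]; [:: 0; 0; 0]; [:: 1; 0; 1]]; [:: [:: 0; 0; 0]; [:: 1; 0; 1]; [:: 0; 0; 0]]]));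
  ([:: 1; 1; 2]%N, ([:: [:: [:: 0; 1; 0]; [:: 0; 0; 1]; [:: 0; 0; 0]]; [:: [:: (-1); 0; (-1)]; [:: (-1); 0; 0]; [:: 1; 0; 1]]; [:: [:: 0; 0; 1]; [:: 0; 0; 1]; [:: 0; 0; 0]]], [:: [:: [:: 0; 1; 0]; [:: 0; 0; 1]; [:: 0; 0; 0]]; [:: [:: (-1); 0; 1]; [:: (-1); 0; 0]; [:: (-1); 0; 1]]; [:: [:: 0; 0; (-1)]; [:: 0; 0; (-1)]; [:: 0; 0; 0]]]));
  ([:: 2; 3; 3]%N, ([:: [:: [:: 0; 1; 0]; [:: 0; 0; 1]; [:: 0; 0; 0]]; [:: [:: 0; (-1); 0]; [:: 0; 0; 0]; [:: 0; (-1); 0]]; [:: [:: (-1); (-1); (-1)]; [:: 1; 1; 0]; [:: 0; 0; 0]]], [:: [:: [:: 0; 1; 0]; [:: 0; 0; 1]; [:: 0; 0; 0]]; [:: [:: 0; (-1); 0]; [:: 0; 0; 0]; [:: 0; (-1); 0]]; [:: [:: (-1); (-1); 0]; [:: 1; 1; 0]; [:: 0; 0; 0]]]));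
  ([:: 1; 1; 2; 3]%N, ([:: [:: [:: 0; 1; 0]; [:: 0; 0; 1]; [:: 0; 0; 0]]; [:: [:: (-1); 1; (-1)]; [:: (-1); 1; 0]; [:: 0; 0; 0]]; [:: [:: (-1); 1; (-1)]; [:: (-1); 1; 0]; [:: 0; 0; 0]]], [:: [:: [:: 0; 1; 0]; [:: 0; 0; 1]; [:: 0; 0; 0]]; [:: [:: 0; (-1); 0]; [:: 0; 0; 0]; [:: 0; (-1); 0]]; [:: [:: 0; 0; 0]; [:: (-1); 0; 1]; [:: 0; 0; 0]]]));
  ([:: 1; 1; 2; 2]%N, ([:: [:: [:: 0; 1; 0]; [:: 0; 0; 1]; [:: 0; 0; 0]]; [:: [:: (-1); (-1); 0]; [:: 1; 1; 0]; [:: (-1); 0; 0]]; [:: [:: 0; 0; 0]; [:: 0; 0; 0]; [:: 0; 0; 0]]], [:: [:: [:: 0; 1; 0]; [:: 0; 0; 1]; [:: 0; 0; 0]]; [:: [:: 0; 0; (-1)]; [:: 0; 0; (-1)]; [:: (-1); 1; 0]]; [:: [:: 0; 0; 0]; [:: 0; 0; 0]; [:: 0; 0; 0]]]));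
  ([:: 1; 1; 3; 2]%N, ([:: [:: [:: 0; 1; 0]; [:: 0; 0; 1]; [:: 0; 0; 0]]; [:: [:: (-1); 1; (-1)]; [:: (-1); 1; 0]; [:: 0; 0; 0]]; [:: [:: 1; (-1); (-1)]; [:: 1; (-1); 0]; [:: 0; 0; 0]]], [:: [:: [:: 0; 1; 0]; [:: 0; 0; 1]; [:: 0; 0; 0]]; [:: [:: 0; 0; 0]; [:: (-1); 0; (-1)]; [:: 0; 0; 0]]; [:: [:: 0; (-1); 0]; [:: 0; 0; 0]; [:: 0; 1; 0]]]));
  ([:: 1; 1; 3; 3; 1; 3]%N, ([:: [:: [:: 0; 1; 0]; [:: 0; 0; 1]; [:: 0; 0; 0]]; [:: [:: 0; 0; 0]; [:: 0; 0; 0]; [:: 0; 0; 0]]; [:: [:: (-1); (-1); (-1)]; [:: 0; 0; 0]; [:: 1; 0; 1]]], [:: [:: [:: 0; 1; 0]; [:: 0; 0; 1]; [:: 0; 0; 0]]; [:: [:: 0; 0; 0]; [:: 0; 0; 0]; [:: 0; 0; 0]]; [:: [:: (-1); 0; (-1)]; [:: 0; 0; (-1)]; [:: 1; 0; 1]]]));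
  ([:: 1; 1; 3; 3]%N, ([:: [:: [:: 0; 1; 0]; [:: 0; 0; 1]; [:: 0; 0; 0]]; [:: [:: 0; 0; 0]; [:: 0; 0; 0]; [:: 0; 0; 0]]; [:: [:: (-1); (-1); 0]; [:: 1; 1; 0]; [:: (-1); 0; 0]]], [:: [:: [:: 0; 1; 0]; [:: 0; 0; 1]; [:: 0; 0; 0]]; [:: [:: 0; 0; 0]; [:: 0; 0; 0]; [:: 0; 0; 0]]; [:: [:: 0; 0; (-1)]; [:: 0; 0; (-1)]; [:: (-1); 1; 0]]]));
  ([:: 2; 2; 3; 1]%N, ([:: [:: [:: 0; 1; 0]; [:: 0; 0; 1]; [:: 0; 0; 0]]; [:: [:: (-1); (-1); (-1)]; [:: 1; 1; 0]; [:: 0; 0; 0]]; [:: [:: 0; 1; (-1)]; [:: 0; 0; (-1)]; [:: 0; 0; 0]]], [:: [:: [:: 0; 0; 1]; [:: 0; 0; 0]; [:: 0; 0; 0]]; [:: [:: (-1); (-1); (-1)]; [:: 0; 0; 0]; [:: 1; 0; 1]]; [:: [:: 0; 0; 0]; [:: (-1); 0; (-1)]; [:: 0; 0; 0]]]));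
  ([:: 2; 2; 1; 2; 3]%N, ([:: [:: [:: 0; 0; 1]; [:: 0; 0; 0]; [:: 0; 0; 0]]; [:: [:: (-1); (-1); 0]; [:: 1; 1; 0]; [:: (-1); 0; 0]]; [:: [:: 0; (-1); (-1)]; [:: 0; 0; 0]; [:: 0; 0; 0]]], [:: [:: [:: 0; 0; 1]; [:: 0; 0; 0]; [:: 0; 0; 0]]; [:: [:: (-1); (-1); 0]; [:: 1; 1; 0]; [:: (-1); 0; 0]]; [:: [:: 0; 0; 0]; [:: 0; 0; (-1)]; [:: 0; 0; 0]]]));
  ([:: 3; 3; 2; 1]%N, ([:: [:: [:: 0; 1; 0]; [:: 0; 0; 1]; [:: 0; 0; 0]]; [:: [:: 0; (-1); (-1)]; [:: 0; 0; 1]; [:: 0; 0; 0]]; [:: [:: 0; (-1); (-1)]; [:: 0; 0; 0]; [:: 0; (-1); 0]]], [:: [:: [:: 0; 0; 1]; [:: 0; 0; 0]; [:: 0; 0; 0]]; [:: [:: (-1); (-1); 0]; [:: 1; 1; 0]; [:: 0; 0; 0]]; [:: [:: 0; (-1); 0]; [:: 0; 0; 0]; [:: (-1); (-1); 0]]]));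
  ([:: 2; 2; 1; 3]%N, ([:: [:: [:: 0; 1; 0]; [:: 0; 0; 1]; [:: 0; 0; 0]]; [:: [:: (-1); (-1); (-1)]; [:: 1; 1; 0]; [:: 0; 0; 0]]; [:: [:: 0; (-1); (-1)]; [:: 0; 0; (-1)]; [:: 0; 0; 0]]], [:: [:: [:: 0; 0; 1]; [:: 0; 0; 0]; [:: 0; 0; 0]]; [:: [:: (-1); 0; (-1)]; [:: 0; 0; (-1)]; [:: 1; 0; 1]]; [:: [:: 0; (-1); 0]; [:: 0; 0; 0]; [:: 0; 1; 0]]]));
  ([:: 3; 3; 1; 2]%N, ([:: [:: [:: 0; 1; 0]; [:: 0; 0; 1]; [:: 0; 0; 0]]; [:: [:: 0; (-1); (-1)]; [:: 0; 0; (-1)]; [:: 0; 0; 0]]; [:: [:: (-1); 1; (-1)]; [:: (-1); 1; 0]; [:: 0; 0; 0]]], [:: [:: [:: 0; 0; 1]; [:: 0; 0; 0]; [:: 0; 0; 0]]; [:: [:: 0; (-1); 0]; [:: 0; 0; 0]; [:: 0; (-1); 0]]; [:: [:: (-1); 0; 1]; [:: 0; 0; (-1)]; [:: (-1); 0; 1]]]));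
  ([:: 3; 3; 1; 3; 2]%N, ([:: [:: [:: 0; 0; 1]; [:: 0; 0; 0]; [:: 0; 0; 0]]; [:: [:: 0; (-1); (-1)]; [:: 0; 0; 0]; [:: 0; 0; 0]]; [:: [:: (-1); 0; (-1)]; [:: 0; 0; (-1)]; [:: 1; 0; 1]]], [:: [:: [:: 0; 0; 1]; [:: 0; 0; 0]; [:: 0; 0; 0]]; [:: [:: 0; 0; (-1)]; [:: 0; 0; (-1)]; [:: 0; 0; 0]]; [:: [:: (-1); (-1); (-1)]; [:: 0; 0; 0]; [:: 1; 0; 1]]]));
  ([:: 2; 2; 3; 3]%N, ([:: [:: [:: 0; 0; 0]; [:: 0; 0; 0]; [:: 0; 0; 0]]; [:: [:: (-1); (-1); (-1)]; [:: 0; 0; 0]; [:: 1; 0; 1]]; [:: [:: (-1); (-1); (-1)]; [:: 1; 1; 0]; [:: 0; 0; 0]]], [:: [:: [:: 0; 0; 0]; [:: 0; 0; 0]; [:: 0; 0; 0]]; [:: [:: (-1); (-1); (-1)]; [:: 0; 0; 0]; [:: 1; 0; 1]]; [:: [:: (-1); (-1); 0]; [:: 1; 1; 0]; [:: 1; 0; 0]]]));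
  ([:: 2; 2; 3; 3; 2; 3]%N, ([:: [:: [:: 0; 0; 0]; [:: 0; 0; 0]; [:: 0; 0; 0]]; [:: [:: (-1); (-1); (-1)]; [:: 0; 0; 0]; [:: 1; 0; 1]]; [:: [:: (-1); (-1); 0]; [:: 1; 1; 0]; [:: 0; (-1); 0]]], [:: [:: [:: 0; 0; 0]; [:: 0; 0; 0]; [:: 0; 0; 0]]; [:: [:: (-1); (-1); (-1)]; [:: 0; 0; 0]; [:: 1; 0; 1]]; [:: [:: (-1); 0; (-1)]; [:: 0; 0; (-1)]; [:: 1; 0; 1]]]))].


Definition cex (w : seq nat) : seq mat * seq mat :=
  nth ([::], [::]) (map snd cexl) (index w (map fst cexl)).

Definition check (w : seq nat) (uv : seq mat * seq mat) : bool :=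
  [&& (size uv.1 == 3%N) && all nil3 uv.1, (size uv.2 == 3%N) && all nil3 uv.2,
      trZ w uv.1 != trZ w uv.2 &
      all (fun w' => (w' == w) || (trZ w' uv.1 == trZ w' uv.2)) P33].

Lemma check_all : all (fun w => check w (cex w)) S33.
Proof. by vm_compute. Qed.

Lemma intr_inj_char (F : fieldType) (hchar : [pchar F] =i pred0) (a b : int) :
  a%:~R = b%:~R :> F -> a = b.
Proof.
move=> /eqP; rewrite -subr_eq0 -rmorphB /= => H; apply/eqP; rewrite -subr_eq0.
move: H; case: (a - b) => n; rewrite ?NegzE ?mulrNz ?oppr_eq0 /=.
- by rewrite -[n%:~R]/(n%:R) (proj1 (pcharf0P _) hchar).
- by rewrite -[n.+1%:~R]/(n.+1%:R) (proj1 (pcharf0P _) hchar).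
Qed.

Lemma part1 (F : closedFieldType) (hchar : [pchar F] =i pred0) w :
  w \in S33 -> ~ separating (P33_minus (trw (F := F) w)).
Proof.
move=> Hw Hsep.
move: (allP check_all w Hw); rewrite /check.
set u := (cex w).1; set v := (cex w).2.
case/and4P => Hu Hv Hne /allP Hall.
have NU := @toT_N F u Hu; have NV := @toT_N F v Hv.
have [f [[[w' Hw' ->] Hneq] Hf]] : separated_by (P33_minus (trw (F := F) w)) (toT F u) (toT F v).
  apply: Hsep => //; exists (trw w); split; first exact: trw_inv.
  rewrite !trw_toT => /(intr_inj_char hchar) /eqP; exact/negP.
apply: Hf; case/orP: (Hall w' Hw') => [/eqP Ew | /eqP E].
  by exfalso; apply: Hneq; rewrite Ew.
by rewrite !trw_toT E.
Qed.

Theorem lemma3p4 (F : closedFieldType) (hchar : [pchar F] =i pred0) :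
  (forall w, w \in S33 -> ~ separating (P33_minus (trw (F := F) w))) /\
  (forall S' : (triple F -> F) -> Prop,
     (forall g, S' g -> @trset F S33 g) ->
     (exists2 w, w \in S33 & forall g, S' g -> ~ eq_on_N g (trw w)) ->
     ~ separating S').
Proof.
split; first exact: part1.
move=> S' HS [w Hw Hn] Hsep; apply: (part1 hchar Hw) => u v Nu Nv Huv.
have [g [Sg Hg]] := Hsep u v Nu Nv Huv.
exists g; split => //; split; last exact: Hn.
by case: (HS g Sg) => w0 Hw0 ->; exists w0 => //; rewrite mem_cat Hw0.
Qed.
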